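(* Consider a $K$-armed bandit with mean reward vector $\mathbf r$ and optimal arm $a^*=\arg\max_a r(a)$, and let $\boldsymbol\theta_t$ be the iterates of LB-SGB (defined in the context) with barrier parameter $\eta>0$. Then for every $t$, $$\pi_{\boldsymbol\theta_t}(a^* )\ge\Big(\frac1K\big(1-\eta\|\nabla\Phi_\eta(\boldsymbol\theta_t)\|_2\big)\Big)^+ ,$$ where $(x)^+=\max\{0,x\}$.
   Context: Softmax policy $\pi_{\boldsymbol\theta}(a)=e^{\theta(a)}/\sum_be^{\theta(b)}$; $\Phi_\eta(\boldsymbol\theta)=\pi_{\boldsymbol\theta}^\top\mathbf r+\frac1\eta\sum_a\log\pi_{\boldsymbol\theta}(a)$. LB-SGB with step size $\alpha$: start from $\boldsymbol\theta=\mathbf 0$; at round $t$ sample $a_t\sim\pi_{\boldsymbol\theta_t}$, observe a reward $R_t(a_t)$ (random with mean $r(a_t)$), set $\hat r_t(a)=\mathbb I\{a_t=a\}R_t(a_t)/\pi_{\boldsymbol\theta_t}(a)$ and update $\boldsymbol\theta_{t+1}=\boldsymbol\theta_t+\alpha\big[(\mathrm{diag}(\pi_{\boldsymbol\theta_t})-\pi_{\boldsymbol\theta_t}\pi_{\boldsymbol\theta_t}^\top)\hat{\mathbf r}_t+\frac1\eta(\mathbf 1-K\pi_{\boldsymbol\theta_t})\big]$. *)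

(* Defs.v *)
From HB Require Import structures.
From mathcomp Require Import all_boot all_order all_algebra.
From mathcomp Require Import all_classical all_reals all_analysis.
Set Implicit Arguments. Unset Strict Implicit. Unset Printing Implicit Defensive.
Import Order.TTheory GRing.Theory Num.Theory.
Import numFieldNormedType.Exports.
Local Open Scope ring_scope.

Section LBSGB.
Variables (R : realType) (K : nat).

Definition softmax (th : 'I_K -> R) (a : 'I_K) : R :=
  expR (th a) / \sum_(b < K) expR (th b).

Definition Phi (eta : R) (r : 'I_K -> R) (th : 'I_K -> R) : R :=
  \sum_(a < K) softmax th a * r a + eta^-1 * \sum_(a < K) ln (softmax th a).

Definition shift (th : 'I_K -> R) (a : 'I_K) (h : R) : 'I_K -> R :=
  fun b => th b + (if b == a then h else 0).

Definition gradPhi (eta : R) (r : 'I_K -> R) (th : 'I_K -> R) (a : 'I_K) : R :=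
  derive1 (fun h : R => Phi eta r (shift th a h)) 0.

Definition norm2 (v : 'I_K -> R) : R := Num.sqrt (\sum_(a < K) v a ^+ 2).

Definition lbsgb_step (alpha eta : R) (act : 'I_K) (Rt : R)
  (th : 'I_K -> R) : 'I_K -> R :=
  let p := softmax th in
  let rhat := fun a => (if a == act then Rt else 0) / p a in
  fun a => th a + alpha * (p a * rhat a - p a * (\sum_(b < K) p b * rhat b)
                           + eta^-1 * (1 - K%:R * p a)).

(* LB-SGB iterates theta_t starting from theta_0 = 0, along a sample path
   (A t = sampled arm at round t, Rew t = observed reward R_t(A t)) *)
Fixpoint lbsgb (alpha eta : R) (A : nat -> 'I_K) (Rew : nat -> R) (t : nat)
  : 'I_K -> R :=
  match t with
  | 0 => fun _ => 0
  | t'.+1 => lbsgb_step alpha eta (A t') (Rew t') (lbsgb alpha eta A Rew t')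
  end.

End LBSGB.

(* Main.v *)
Require Import Defs.
From HB Require Import structures.
From mathcomp Require Import all_boot all_order all_algebra.
From mathcomp Require Import all_classical all_reals all_analysis.
From mathcomp Require Import ring lra.
Import Order.TTheory GRing.Theory Num.Theory.
Local Open Scope ring_scope.

Section S.
Variables (R : realType).
Set Implicit Arguments.
Lemma isd_ext (f g : R -> R) (x d : R) : (forall y, f y = g y) -> is_derive x 1 g d -> is_derive x 1 f d.
Proof. by move=> fg; have -> : f = g by apply/funext. Qed.

Lemma isd_add (f g : R -> R) (x df dg : R) : is_derive x 1 f df -> is_derive x 1 g dg ->
  is_derive x 1 (fun h => f h + g h) (df + dg).
Proof. move=> Hf Hg; have H := is_deriveD Hf Hg; apply: isd_ext H => y //. Qed.
Lemma isd_mul (f g : R -> R) (x df dg : R) : is_derive x 1 f df -> is_derive x 1 g dg ->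
  is_derive x 1 (fun h => f h * g h) (f x * dg + g x * df).
Proof. move=> Hf Hg; have H := is_deriveM Hf Hg; apply: isd_ext H => y //. Qed.
Lemma isd_inv (f : R -> R) (x df : R) : f x != 0 -> is_derive x 1 f df ->
  is_derive x 1 (fun h => (f h)^-1) (- (f x)^-2 * df).
Proof. move=> fx Hf; have H := is_deriveV fx Hf; apply: isd_ext H => y //. Qed.
Lemma isd_cst (c x : R) : is_derive x 1 (fun _ => c) 0.
Proof. have H := @is_derive_cst R R R c x 1; apply: isd_ext H => y //. Qed.
Lemma isd_id (x : R) : is_derive x 1 (fun h => h) 1.
Proof. have H := @is_derive_id R R x 1; apply: isd_ext H => y //. Qed.
Lemma isd_sum n (f : 'I_n -> R -> R) (x : R) (df : 'I_n -> R) :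
  (forall i, is_derive x 1 (f i) (df i)) ->
  is_derive x 1 (fun h => \sum_(i < n) f i h) (\sum_(i < n) df i).
Proof. move=> Hf; have H := is_derive_sum Hf; apply: isd_ext H => y. by rewrite fct_sumE. Qed.
Variable K : nat.
Lemma isd_exp (g : R -> R) (x d : R) : is_derive x 1 g d ->
  is_derive x 1 (fun h => expR (g h)) (expR (g x) * d).
Proof.
move=> H; have := @is_derive1_comp R expR g x (expR (g x)) d (is_derive_expR _) H.
by [].
Qed.

Lemma isd_ln (g : R -> R) (x d : R) : 0 < g x -> is_derive x 1 g d ->
  is_derive x 1 (fun h => ln (g h)) ((g x)^-1 * d).
Proof.
move=> gx H; have := @is_derive1_comp R (@ln R) g x ((g x)^-1) d (is_derive1_ln gx) H.
by [].
Qed.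

Definition ind (b a : 'I_K) : R := if b == a then 1 else 0.

Lemma dE (th : 'I_K -> R) (a b : 'I_K) (x : R) :
  is_derive x 1 (fun h => expR (Defs.shift th a h b)) (expR (Defs.shift th a x b) * ind b a).
Proof.
apply: isd_exp; rewrite /Defs.shift /ind; case: eqP => _ /=.
  have H := isd_add (isd_cst (th b) x) (isd_id x); rewrite add0r in H; exact: H.
exact: isd_cst.
Qed.

Lemma sum_ind (a : 'I_K) (F : 'I_K -> R) : \sum_(b < K) F b * ind b a = F a.
Proof.
rewrite (bigD1 a) //= /ind eqxx mulr1 big1 ?addr0 // => b /negbTE ->.
by rewrite mulr0.
Qed.

Lemma dZ (th : 'I_K -> R) (a : 'I_K) (x : R) :
  is_derive x 1 (fun h => \sum_(b < K) expR (Defs.shift th a h b)) (expR (Defs.shift th a x a)).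
Proof.
apply: is_derive_eq; first by apply: isd_sum => b; exact: dE.
by rewrite (sum_ind a (fun b => expR (Defs.shift th a x b))).
Qed.

Lemma shift0 (th : 'I_K -> R) a : Defs.shift th a 0 = th.
Proof. by apply/funext => b; rewrite /Defs.shift; case: ifP; rewrite addr0. Qed.

Lemma Zpos (th : 'I_K -> R) (a : 'I_K) : 0 < \sum_(b < K) expR (th b).
Proof.
rewrite (bigD1 a) //=; apply: ltr_pwDl; first exact: expR_gt0.
by apply: sumr_ge0 => i _; exact: expR_ge0.
Qed.

Lemma sm_pos (th : 'I_K -> R) b : 0 < softmax th b.
Proof. by rewrite /softmax divr_gt0 // ?expR_gt0 // (Zpos th b). Qed.

Lemma sm_sum (th : 'I_K -> R) (a : 'I_K) : \sum_(b < K) softmax th b = 1.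
Proof. by rewrite /softmax -mulr_suml divff // gt_eqF // (Zpos th a). Qed.

Lemma dsm (th : 'I_K -> R) (a b : 'I_K) :
  is_derive (0:R) 1 (fun h : R => softmax (Defs.shift th a h) b)
    (softmax th b * (ind b a - softmax th a)).
Proof.
rewrite /softmax; apply: is_derive_eq.
  apply: (isd_mul (dE th a b 0) (isd_inv _ (dZ th a 0))).
  by rewrite shift0 gt_eqF // (Zpos th a).
rewrite !shift0.
have := Zpos th a; set Z := \sum_(b0 < K) _ => Zp.
have Z0 : Z != 0 by rewrite gt_eqF.
rewrite /ind; case: eqP => _; field; exact: Z0.
Qed.

Lemma dPhi (eta : R) (r : 'I_K -> R) (th : 'I_K -> R) (a : 'I_K) :
  gradPhi eta r th a =
  \sum_(b < K) r b * (softmax th b * (ind b a - softmax th a))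
  + eta^-1 * \sum_(b < K) (ind b a - softmax th a).
Proof.
rewrite /gradPhi derive1E; apply: derive_val.
rewrite /Phi; apply: is_derive_eq.
  apply: isd_add.
    apply: isd_sum => b; exact: (isd_mul (dsm th a b) (isd_cst (r b) 0)).
  apply: (isd_mul (isd_cst eta^-1 0)).
  apply: isd_sum => b; apply: isd_ln; last exact: dsm.
  by rewrite shift0 sm_pos.
rewrite /= !shift0 !mulr0 !addr0.
congr (_ + _).
  by under eq_bigr => b _ do rewrite mulr0 add0r.
congr (_ * _); apply: eq_big => // b _.
by rewrite mulrA mulVf ?mul1r // gt_eqF // sm_pos.
Qed.

Lemma grad_lb (eta : R) (r : 'I_K -> R) (th : 'I_K -> R) (a : 'I_K)
  (ha : forall b, r b <= r a) :
  eta^-1 * (1 - K%:R * softmax th a) <= gradPhi eta r th a.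
Proof.
rewrite dPhi.
set p := softmax th.
have e2 : \sum_(b < K) (ind b a - p a) = 1 - K%:R * p a.
  have := sum_ind a (fun _ => 1); under eq_bigr => b _ do rewrite mul1r.
  move=> e; rewrite sumrB e sumr_const card_ord.
  by rewrite mulr_natl.
have e1 : \sum_(b < K) r b * (p b * (ind b a - p a))
    = p a * \sum_(b < K) p b * (r a - r b).
  transitivity (\sum_(b < K) ((r b * p b) * ind b a) - (\sum_(b < K) r b * p b) * p a).
    rewrite mulr_suml -sumrB; apply: eq_bigr => b _; ring.
  rewrite sum_ind.
  have -> : \sum_(b < K) p b * (r a - r b) = r a * \sum_(b < K) p b - \sum_(b < K) r b * p b.
    rewrite mulr_sumr -sumrB; apply: eq_bigr => b _; ring.
  rewrite (sm_sum th a); ring.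
rewrite e1 e2 lerDr; apply: mulr_ge0; first exact: ltW (sm_pos th a).
apply: sumr_ge0 => b _; apply: mulr_ge0; first exact: ltW (sm_pos th b).
by rewrite subr_ge0.
Qed.
End S.

Theorem lemma5p3 (R : realType) (K : nat) (hK : (0 < K)%N)
  (r : 'I_K -> R) (astar : 'I_K) (hstar : forall a : 'I_K, r a <= r astar)
  (eta alpha : R) (heta : 0 < eta)
  (A : nat -> 'I_K) (Rew : nat -> R) (t : nat) :
  Num.max 0 (K%:R^-1 * (1 - eta * norm2 (gradPhi eta r (lbsgb alpha eta A Rew t))))
    <= softmax (lbsgb alpha eta A Rew t) astar.
Proof.
set th := lbsgb alpha eta A Rew t.
set g := gradPhi eta r th.
have hg := @grad_lb R K eta r th astar hstar.
rewrite ge_max (ltW (@sm_pos R K th astar)) /=.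
have Kp : 0 < K%:R :> R by rewrite ltr0n.
have hn : g astar <= norm2 g.
  rewrite /norm2 (le_trans (ler_norm _)) // -sqrtr_sqr ler_wsqrtr //.
  rewrite (bigD1 astar) //= lerDl; apply: sumr_ge0 => i _; exact: sqr_ge0.
rewrite ler_pdivrMl //.
have : eta * (eta^-1 * (1 - K%:R * softmax th astar)) <= eta * g astar.
  by rewrite ler_pM2l.
rewrite mulrA mulfV ?gt_eqF // mul1r => h1.
have : eta * g astar <= eta * norm2 g by rewrite ler_pM2l.
move=> h2.
set u := eta * norm2 g in h2 *; set v := eta * g astar in h1 h2; set w := K%:R * _ in h1 *.
lra.
Qed.
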